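(* Let $n\geq 4$ and $\alpha_2,\dots,\alpha_n\in\mathbb{C}$ with $\alpha_2=\alpha_3=0$ and $\alpha_4\neq0$. Then the transposed Poisson algebra $\mathbf{TP}(\alpha_2,\dots,\alpha_n)$ is isomorphic to $\mathbf{TP}(0,0,1,\alpha,0,\dots,0)$ for some $\alpha\in\mathbb{C}$, i.e. to the algebra with parameters $\alpha_4'=1$, $\alpha_5'=\alpha$ (present only when $n\geq5$), and all other $\alpha_i'=0$.
   Context: $\mu_0^n$ is the complex commutative associative algebra with basis $\{e_1,\dots,e_n\}$ and $e_i\cdot e_j=e_{i+j}$ for $2\leq i+j\leq n$, other products zero. For $\alpha_2,\dots,\alpha_n\in\mathbb{C}$, $\mathbf{TP}(\alpha_2,\dots,\alpha_n)$ denotes $\mu_0^n$ with its associative product together with the bracket $[e_i,e_j]=(j-i)\sum_{t=i+j-1}^{n}\alpha_{t-i-j+3}e_t$ for $3\leq i+j\leq n+1$, other brackets of basis elements zero. Isomorphisms preserve both operations. *)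

(* Defs.v *)
(* The complex field is modelled as R[i] = complex R for
   R : realType (any complete archimedean ordered field, i.e. the reals). *)
From HB Require Import structures.
From mathcomp Require Import all_boot all_order all_algebra.
From mathcomp Require Import complex.
From mathcomp Require Import reals.
Set Implicit Arguments. Unset Strict Implicit. Unset Printing Implicit Defensive.
Import Order.TTheory GRing.Theory Num.Theory.
Local Open Scope ring_scope.
Local Open Scope complex_scope.

(* Elements of mu_0^n are row vectors x : 'rV[C]_n ; the coordinate of index
   k : 'I_n is the coefficient of the basis vector e_(k+1). *)

Section TP.
Variable C : comRingType.

(* coefficient of e_t in e_i . e_j (1-based indices) *)
Definition mu_coef (n i j t : nat) : C :=
  if (2 <= i + j <= n)%N && (t == i + j)%N then 1 else 0.

(* coefficient of e_t in [e_i, e_j] for TP(alpha_2,...,alpha_n) *)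
Definition br_coef (alpha : nat -> C) (n i j t : nat) : C :=
  if (3 <= i + j <= n.+1)%N && (i + j - 1 <= t <= n)%N
  then (j%:R - i%:R) * alpha (t + 3 - (i + j))%N else 0.

Definition TPmul (n : nat) (x y : 'rV[C]_n) : 'rV[C]_n :=
  \row_(t < n) \sum_(i < n) \sum_(j < n)
     x 0 i * y 0 j * mu_coef n i.+1 j.+1 t.+1.

Definition TPbr (alpha : nat -> C) (n : nat) (x y : 'rV[C]_n) : 'rV[C]_n :=
  \row_(t < n) \sum_(i < n) \sum_(j < n)
     x 0 i * y 0 j * br_coef alpha n i.+1 j.+1 t.+1.

End TP.

Definition TP_isomorphic (C : comUnitRingType) (n : nat)
    (alpha beta : nat -> C) : Prop :=
  exists f : 'M[C]_n, f \in unitmx /\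
    (forall x y : 'rV[C]_n, TPmul (x *m f) (y *m f) = TPmul x y *m f) /\
    (forall x y : 'rV[C]_n,
        TPbr beta (x *m f) (y *m f) = TPbr alpha x y *m f).

Definition TP_normal_params (C : comRingType) (a : C) : nat -> C :=
  fun k => if k == 4%N then 1 else if k == 5%N then a else 0.

(* Main.v *)
Require Import Defs.
From HB Require Import structures.
From mathcomp Require Import all_boot all_order all_algebra.
From mathcomp Require Import complex.
From mathcomp Require Import reals.
From mathcomp Require Import ring zify.
Import Order.TTheory GRing.Theory Num.Theory.
Local Open Scope ring_scope.

Section Gen.
Variable C : comRingType.
Implicit Types P Q : {poly C}.

Definition eqm k P Q := exists g, P = Q + 'X^k * g.

Lemma eqm_refl k P : eqm k P P.
Proof. by exists 0; rewrite mulr0 addr0. Qed.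
Lemma eqm_sym k P Q : eqm k P Q -> eqm k Q P.
Proof. by case=> g ->; exists (-g); ring. Qed.
Lemma eqm_trans k P Q S : eqm k P Q -> eqm k Q S -> eqm k P S.
Proof. by case=> g -> [h ->]; exists (g + h); ring. Qed.
Lemma eqm_add k P Q P' Q' : eqm k P Q -> eqm k P' Q' -> eqm k (P + P') (Q + Q').
Proof. by case=> g -> [h ->]; exists (g + h); ring. Qed.
Lemma eqm_sub k P Q P' Q' : eqm k P Q -> eqm k P' Q' -> eqm k (P - P') (Q - Q').
Proof. by case=> g -> [h ->]; exists (g - h); ring. Qed.
Lemma eqm_mul k P Q P' Q' : eqm k P Q -> eqm k P' Q' -> eqm k (P * P') (Q * Q').
Proof. by case=> g -> [h ->]; exists (g * Q' + Q * h + 'X^k * g * h); ring. Qed.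
Lemma eqm_mull k S P Q : eqm k P Q -> eqm k (S * P) (S * Q).
Proof. by move=> H; apply: eqm_mul => //; apply: eqm_refl. Qed.
Lemma eqm_shift k j S P Q : eqm k P Q -> eqm (k + j) ('X^j * S * P) ('X^j * S * Q).
Proof. by case=> g ->; exists (S * g); rewrite exprD; ring. Qed.
Lemma eqm_weak j k P Q : (j <= k)%N -> eqm k P Q -> eqm j P Q.
Proof.
move=> jk [g ->]; exists ('X^(k - j) * g).
by rewrite mulrA -exprD subnKC.
Qed.
Lemma eqm_deriv k P Q : eqm k.+1 P Q -> eqm k P^`() Q^`().
Proof.
case=> g ->; exists (g *+ k.+1 + 'X * g^`()).
rewrite derivD derivM derivXn /= exprS; rewrite mulrnAl; ring.
Qed.

Arguments eqm_trans {k P Q S}. Arguments eqm_mul {k P Q P' Q'}. Arguments eqm_deriv {k P Q}.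
Arguments eqm_sub {k P Q P' Q'}. Arguments eqm_sym {k P Q}.

Lemma comp_exp (q p : {poly C}) k : (q ^+ k) \Po p = (q \Po p) ^+ k.
Proof. by elim: k => [|k IH]; rewrite ?expr0 ?comp_polyC // !exprS comp_polyM IH. Qed.

Lemma eqm_comp k P Q (p1 : {poly C}) : eqm k P Q -> eqm k (P \Po ('X * p1)) (Q \Po ('X * p1)).
Proof.
case=> g ->; exists (p1 ^+ k * (g \Po ('X * p1))).
by rewrite comp_polyD comp_polyM comp_exp comp_polyX exprMn; ring.
Qed.

Lemma taylor (q p d : {poly C}) : exists r, q \Po (p + d) = q \Po p + d * (q^`() \Po p) + d ^+ 2 * r.
Proof.
elim/poly_ind: q => [|Q c [r Hr]].
  by exists 0; rewrite !comp_polyC deriv0 comp_polyC; ring.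
exists (r * (p + d) + (Q^`() \Po p)).
rewrite derivMXaddC !comp_polyD !comp_polyM !comp_polyX !comp_polyC Hr.
ring.
Qed.

Variable n : nat.
Definition px (x : 'rV[C]_n) : {poly C} := \sum_(i < n) x 0 i *: 'X^(i.+1).
Definition rv (P : {poly C}) : 'rV[C]_n := \row_(t < n) P`_(t.+1).
Definition Uof (alpha : nat -> C) : {poly C} := \poly_(m < n) alpha m.+2.

Lemma rvD P Q : rv (P + Q) = rv P + rv Q.
Proof. by apply/rowP => t; rewrite !mxE coefD. Qed.

Lemma rv_eqm P Q : eqm n.+1 P Q -> rv P = rv Q.
Proof.
case=> g ->; rewrite rvD; apply/rowP => t; rewrite !mxE coefXnM.
by rewrite ltnS ltn_ord addr0.
Qed.

Lemma pxX x : px x = 'X * \sum_(i < n) x 0 i *: 'X^i.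
Proof. by rewrite /px mulr_sumr; apply: eq_bigr => i _; rewrite exprS scalerAr. Qed.

Lemma pxrv Q : eqm n.+1 (px (rv ('X * Q))) ('X * Q).
Proof.
exists (- drop_poly n.+1 ('X * Q)).
rewrite -{2}(poly_take_drop n.+1 ('X * Q)).
rewrite /take_poly poly_def big_ord_recl /=.
rewrite coefXM eqxx scale0r add0r /px /rv.
rewrite mulrN [_ * 'X^_]mulrC addrK; apply: eq_bigr => i _; rewrite mxE; congr (_ *: _).
Qed.

Lemma TPmul_rv x y : TPmul x y = rv (px x * px y).
Proof.
have E : px x * px y = \sum_(i < n) \sum_(j < n) (x 0 i * y 0 j) *: 'X^(i.+1 + j.+1).
  rewrite /px mulr_suml; apply: eq_bigr => i _; rewrite mulr_sumr; apply: eq_bigr => j _.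
  by rewrite -scalerAl -scalerAr scalerA exprD.
apply/rowP => t; rewrite !mxE E coef_sum; apply: eq_bigr => i _.
rewrite coef_sum; apply: eq_bigr => j _; rewrite coefZ coefXn /mu_coef.
congr (_ * _); case: eqP => h; rewrite ?andbF ?andbT //.
by rewrite -h ltn_ord h addSn ltnS addnS ltn0Sn.
Qed.

Lemma pxD x : (px x)^`() = \sum_(i < n) x 0 i *: ('X^i *+ i.+1).
Proof.
rewrite /px raddf_sum; apply: eq_bigr => i _; by rewrite /= derivZ derivXn. 
Qed.

Lemma TPbr_rv alpha x y :
  TPbr alpha x y = rv ((px x * (px y)^`() - (px x)^`() * px y) * Uof alpha).
Proof.
have E : px x * (px y)^`() - (px x)^`() * px y =
  \sum_(i < n) \sum_(j < n) (x 0 i * y 0 j * (j.+1%:R - i.+1%:R)) *: 'X^((i + j).+1).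
  rewrite !pxD /px !mulr_suml -sumrB; apply: eq_bigr => i _.
  rewrite !mulr_sumr -sumrB; apply: eq_bigr => j _.
  rewrite -!mul_polyC !polyCM polyCB !polyC_natr.
  rewrite !exprS exprD.
  ring.
apply/rowP => t; rewrite !mxE E mulr_suml coef_sum; apply: eq_bigr => i _.
rewrite mulr_suml coef_sum; apply: eq_bigr => j _.
rewrite -scalerAl coefZ coefXnM coef_poly /br_coef.
have tn := ltn_ord t.
case: (ltnP t.+1 (i+j).+1) => h.
  have -> : (i.+1 + j.+1 - 1 <= t.+1)%N = false by lia.
  by rewrite /= andbF !mulr0.
have -> : (t.+1 - (i + j).+1 < n)%N by lia.
case: (posnP (i + j)) => ij.
  have -> : (j.+1%:R - i.+1%:R : C) = 0.
    have [-> ->] : (i = 0 :> nat)%N /\ (j = 0 :> nat)%N by lia.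
    by rewrite subrr.
  by rewrite mulr0 !mul0r if_same mulr0.
have -> : [&& (2 < i.+1 + j.+1 <= n.+1)%N, (i.+1 + j.+1 - 1 <= t.+1)%N & (t < n)%N] by apply/and3P; split; lia.
have -> : (t.+1 + 3 - (i.+1 + j.+1) = (t.+1 - (i + j).+1).+2)%N by lia.
by rewrite !mulrA.
Qed.

Lemma eqm_mix k P Q S T : eqm k.+1 P ('X * Q) -> eqm k S T ->
  eqm k.+1 (P * S) ('X * Q * T).
Proof.
case=> g -> [h ->]; exists (Q * h + g * T + g * 'X^k * h).
rewrite exprS; ring.
Qed.
Arguments eqm_mix {k P Q S T}.

Lemma Wfact (A1 B1 : {poly C}) :
  ('X * A1) * ('X * B1)^`() - ('X * A1)^`() * ('X * B1) =
  'X^2 * (A1 * B1^`() - A1^`() * B1).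
Proof. rewrite !derivM derivX; ring. Qed.

Variable p1 : {poly C}.
Definition fm : 'M[C]_n := \matrix_(i < n, t < n) ((('X * p1) ^+ i.+1)`_t.+1).

Lemma mulf x : x *m fm = rv (px x \Po ('X * p1)).
Proof.
apply/rowP => t; rewrite !mxE /px raddf_sum coef_sum; apply: eq_bigr => i _.
by rewrite mxE /= comp_polyZ coefZ comp_exp comp_polyX.
Qed.

Lemma pxcomp x : eqm n.+1 (px (rv (px x \Po ('X * p1)))) (px x \Po ('X * p1)).
Proof.
rewrite [px x]pxX comp_polyM comp_polyX -mulrA; exact: pxrv.
Qed.

Lemma mul_pres x y : TPmul (x *m fm) (y *m fm) = TPmul x y *m fm.
Proof.
rewrite !TPmul_rv !mulf; apply: rv_eqm.
apply: (@eqm_trans _ _ ((px x * px y) \Po ('X * p1)) _).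
  by rewrite comp_polyM; apply: eqm_mul; apply: pxcomp.
apply: eqm_sym; apply: eqm_comp.
by rewrite [px x]pxX -mulrA; apply: pxrv.
Qed.

Lemma br_pres alpha beta : (1 <= n)%N ->
  eqm n.-1 (('X * p1)^`() * Uof beta) (Uof alpha \Po ('X * p1)) ->
  forall x y, TPbr beta (x *m fm) (y *m fm) = TPbr alpha x y *m fm.
Proof.
move=> n1 H x y.
rewrite !TPbr_rv !mulf; apply: rv_eqm.
set p := 'X * p1.
set A := px x; set B := px y.
have [A1 hA] : exists A1, A = 'X * A1 by exists (\sum_(i < n) x 0 i *: 'X^i); exact: pxX.
have [B1 hB] : exists B1, B = 'X * B1 by exists (\sum_(i < n) y 0 i *: 'X^i); exact: pxX.
have hx : eqm n.+1 (px (rv (A \Po p))) ('X * (p1 * (A1 \Po p))).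
  have -> : 'X * (p1 * (A1 \Po p)) = A \Po p by rewrite hA comp_polyM comp_polyX mulrA.
  exact: pxcomp.
have hy : eqm n.+1 (px (rv (B \Po p))) ('X * (p1 * (B1 \Po p))).
  have -> : 'X * (p1 * (B1 \Po p)) = B \Po p by rewrite hB comp_polyM comp_polyX mulrA.
  exact: pxcomp.
have hx' := eqm_deriv hx.
have hy' := eqm_deriv hy.
have hW : eqm n.+1
   (px (rv (A \Po p)) * (px (rv (B \Po p)))^`() - (px (rv (A \Po p)))^`() * px (rv (B \Po p)))
   ('X * (p1 * (A1 \Po p)) * ('X * (p1 * (B1 \Po p)))^`()
     - ('X * (p1 * (B1 \Po p))) * ('X * (p1 * (A1 \Po p)))^`()).
  apply: eqm_sub; first exact: eqm_mix.
  by rewrite mulrC; apply: eqm_mix.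
apply: (eqm_trans (eqm_mul hW (eqm_refl _ (Uof beta)))).
have -> : 'X * (p1 * (A1 \Po p)) * ('X * (p1 * (B1 \Po p)))^`()
     - ('X * (p1 * (B1 \Po p))) * ('X * (p1 * (A1 \Po p)))^`() =
          'X^2 * (p1 ^+ 2 * ((A1 * B1^`() - A1^`() * B1) \Po p)) * p^`().
  rewrite /p comp_polyB !comp_polyM !derivM !deriv_comp !derivM derivX; ring.
apply: (@eqm_trans _ _ ((A * B^`() - A^`() * B) * Uof alpha \Po p) _).
  rewrite -mulrA comp_polyM.
  have -> : (A * B^`() - A^`() * B) \Po p =
     'X^2 * (p1 ^+ 2 * ((A1 * B1^`() - A1^`() * B1) \Po p)).
    by rewrite hA hB Wfact comp_polyM comp_exp comp_polyX exprMn mulrA.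
  have e : n.+1 = (n.-1 + 2)%N by lia.
  by rewrite e; apply: eqm_shift.
apply: eqm_sym; apply: eqm_comp.
rewrite hA hB Wfact.
have -> : 'X^2 * (A1 * B1^`() - A1^`() * B1) * Uof alpha =
   'X * ('X * (A1 * B1^`() - A1^`() * B1) * Uof alpha) by rewrite exprS expr1 !mulrA.
exact: pxrv.
Qed.

End Gen.
Arguments eqm {C}.

Lemma decomp0 (F : comRingType) (q : {poly F}) : exists q1, q = (q`_0)%:P + 'X * q1.
Proof.
exists (drop_poly 1 q).
rewrite -{1}(poly_take_drop 1 q) expr1 mulrC; congr (_ + _).
by apply/polyP => i; rewrite coef_take_poly coefC; case: i.
Qed.

Lemma exist_step (F : numFieldType) (U E : {poly F}) (a4 c a : F) m (p1 G : {poly F}) :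
  U^`() = 'X * (a4 *+ 2)%:P + 'X^2 * E -> a4 * c = 1 -> p1`_0 = c ->
  ('X * p1)^`() * ('X^2 + a%:P * 'X^3) = U \Po ('X * p1) + 'X^(m.+4) * G ->
  exists p2 : {poly F}, p2`_0 = c /\ exists W,
    ('X * p2)^`() * ('X^2 + a%:P * 'X^3) = U \Po ('X * p2) + 'X^((m.+4).+1) * W.
Proof.
move=> hU' hc hp0 hG.
have [q1 hq1] := decomp0 _ p1; rewrite hp0 in hq1.
have [G1 hG1] := decomp0 _ G.
set g0 := G`_0 in hG1.
have nz : (m.+1%:R : F) != 0 by rewrite pnatr_eq0.
set d := - g0 / m.+1%:R.
have hd : g0%:P = - (m.+1%:R * d%:P).
  by rewrite -polyC_natr -polyCM -polyCN mulrC /d divfK // opprK.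
have hc' : a4%:P * c%:P = 1 by rewrite -polyCM hc.
exists (p1 + d%:P * 'X^(m.+2)); split.
  by rewrite coefD coefCM coefXn /= mulr0 addr0.
have [r hr] := taylor _ U ('X * p1) (d%:P * 'X^(m.+3)).
have e1 : 'X * (p1 + d%:P * 'X^(m.+2)) = 'X * p1 + d%:P * 'X^(m.+3) by rewrite !exprS; ring.
have e2 : (d%:P * 'X^(m.+3))^`() = d%:P * ('X^(m.+2) *+ m.+3).
  by rewrite derivM derivC mul0r add0r derivXn.
have e3 : U^`() \Po ('X * p1) =
   'X *+ 2 + 'X^2 * (a4%:P *+ 2 * q1 + p1 ^+ 2 * (E \Po ('X * p1))).
  rewrite hU' comp_polyD !comp_polyM comp_polyC comp_polyX polyCMn.
  rewrite {1}hq1.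
  transitivity ('X *+ 2 * (a4%:P * c%:P) + 'X^2 * (a4%:P *+ 2 * q1 + p1 ^+ 2 * (E \Po ('X * p1)))).
    ring.
  by rewrite hc' mulr1.
rewrite e1 derivD mulrDl hr hG e2 e3 hG1 hd.
exists (G1 + m.+3%:R * d%:P * a%:P - d%:P * (a4%:P *+ 2 * q1 + p1 ^+ 2 * (E \Po ('X * p1)))
        - d%:P ^+ 2 * 'X^(m.+1) * r).
rewrite !exprS; ring.
Qed.

Lemma exist_base (F : numFieldType) (U D : {poly F}) (a4 a5 c a : F) :
  U = a4%:P * 'X^2 + a5%:P * 'X^3 + 'X^4 * D -> a4 * c = 1 -> a = a5 * c ^+ 2 ->
  exists G, ('X * c%:P)^`() * ('X^2 + a%:P * 'X^3) = U \Po ('X * c%:P) + 'X^4 * G.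
Proof.
move=> hU hc ha.
have hc' : a4%:P * c%:P = 1 by rewrite -polyCM hc.
exists (- (c%:P ^+ 4 * (D \Po ('X * c%:P)))).
rewrite hU !comp_polyD !comp_polyM !comp_polyC ?comp_exp !comp_polyX ha polyCM polyC_exp.
transitivity (c%:P * 'X^2 * (a4%:P * c%:P) + a5%:P * c%:P ^+ 3 * 'X^3).
  by rewrite hc' mulr1 derivM derivX derivC; ring.
ring.
Qed.

Lemma exist_all (F : numFieldType) (U D E : {poly F}) (a4 a5 c a : F) :
  U = a4%:P * 'X^2 + a5%:P * 'X^3 + 'X^4 * D ->
  U^`() = 'X * (a4 *+ 2)%:P + 'X^2 * E -> a4 * c = 1 -> a = a5 * c ^+ 2 ->
  forall m, exists p1 : {poly F}, p1`_0 = c /\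
    eqm (m.+4) (('X * p1)^`() * ('X^2 + a%:P * 'X^3)) (U \Po ('X * p1)).
Proof.
move=> hU hU' hc ha; elim=> [|m [p1 [hp0 [G hG]]]].
  have [G hG] := exist_base _ _ _ _ _ _ _ hU hc ha.
  by exists c%:P; split; [rewrite coefC | exists G].
have [p2 [hp2 [W hW]]] := exist_step _ _ _ _ _ _ _ _ _ hU' hc hp0 hG.
by exists p2; split => //; exists W.
Qed.

Lemma fm_unit (F : fieldType) n (p1 : {poly F}) : p1`_0 != 0 -> fm F n p1 \in unitmx.
Proof.
move=> h0.
have coefE i t : fm F n p1 i t = ('X^(i.+1) * p1 ^+ i.+1)`_t.+1 by rewrite mxE exprMn.
rewrite unitmxE unitfE -det_tr det_trig.
  apply/prodf_neq0 => i _; rewrite mxE coefE coefXnM ltnn subnn.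
  by rewrite -horner_coef0 horner_exp horner_coef0 expf_neq0.
apply/is_trig_mxP => i j ij; rewrite mxE coefE coefXnM.
by rewrite ltnS ij.
Qed.

Lemma Udecomp (F : comRingType) n (alpha : nat -> F) : (4 <= n)%N -> alpha 2%N = 0 -> alpha 3%N = 0 ->
  Uof F n alpha = (alpha 4%N)%:P * 'X^2 + (alpha 5%N)%:P * 'X^3 + 'X^4 * drop_poly 4 (Uof F n alpha).
Proof.
move=> hn h2 h3.
rewrite -{1}(poly_take_drop 4 (Uof F n alpha)) [_ * 'X^4]mulrC; congr (_ + _).
apply/polyP => i; rewrite coef_take_poly coef_poly !coefD !coefCM !coefXn.
case: i => [|[|[|[|i]]]] /=.
- by rewrite ifT ?h2 ?mulr0 ?addr0 //; lia.
- by rewrite ifT ?h3 ?mulr0 ?addr0 //; lia.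
- by rewrite ifT ?mulr0 ?addr0 ?mulr1 //; lia.
- by rewrite ifT ?mulr0 ?add0r ?mulr1 //; lia.
- by rewrite !mulr0 addr0.
Qed.

Lemma Ubeta (F : comRingType) n (a : F) : (4 <= n)%N ->
  Uof F n (TP_normal_params a) = 'X^2 + a%:P * 'X^3.
Proof.
move=> hn; apply/polyP => i; rewrite coef_poly !coefD !coefCM !coefXn /TP_normal_params.
case: i => [|[|[|[|i]]]] /=.
- by rewrite ifT ?mulr0 ?addr0 //; lia.
- by rewrite ifT ?mulr0 ?addr0 //; lia.
- by rewrite ifT ?mulr0 ?addr0 //; lia.
- by rewrite ifT ?mulr1 ?add0r //; lia.
- by rewrite mulr0 addr0; case: ifP.
Qed.

Theorem mainTheorem9 (R : realType) (n : nat) (alpha : nat -> R[i])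
  (hn : (4 <= n)%N) (h2 : alpha 2%N = 0) (h3 : alpha 3%N = 0)
  (h4 : alpha 4%N != 0) :
  exists a : R[i], TP_isomorphic n alpha (TP_normal_params a).
Proof.
set a4 := alpha 4%N; set c := a4^-1; set a := alpha 5%N * c ^+ 2.
exists a.
have hU := Udecomp _ _ _ hn h2 h3.
set D := drop_poly 4 _ in hU.
have hU' : (Uof _ n alpha)^`() = 'X * (a4 *+ 2)%:P +
    'X^2 * ((alpha 5%N *+ 3)%:P + 'X * (D *+ 4) + 'X^2 * D^`()).
  rewrite {1}hU !derivD !derivM !derivC !derivX ?derivXn /= !polyCMn; ring.
have hc : a4 * c = 1 by rewrite mulfV.
have [p1 [hp0 hE]] := exist_all _ _ _ _ _ _ _ _ hU hU' hc (erefl a) n.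
exists (fm _ n p1); split; first by apply: fm_unit; rewrite hp0 invr_eq0.
split; first exact: mul_pres.
apply: br_pres; first lia.
rewrite Ubeta //; apply: eqm_weak hE; lia.
Qed.
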